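(* Let $G=(V,E,w)$ be a finite undirected graph with positive vertex weights and $v\in V$, and run the confinement procedure from $v$ (with any choice of extending children at each step). (a) If $v$ is unconfined, then $v$ is sheathed (there is an MWIS of $G$ not containing $v$), and $\alpha_w(G[V\setminus\{v\}])=\alpha_w(G)$. (b) If $v$ is confined with confining set $S_v$, then either $v$ is sheathed or $S_v$ is contained in every MWIS of $G$. Moreover, if some $u\in S_v$ is also confined, with confining set $S_u$, and $v\in S_u$, then $\{u,v\}$ is a simultaneous set.
   Context: $G=(V,E,w)$: finite simple undirected graph, $w:V\to\mathbb{R}^{+}$, $w(S)=\sum_{x\in S}w(x)$. MWIS = maximum weight independent set; MWVC = minimum weight vertex cover. $N(S)=(\bigcup_{x\in S}N(x))\setminus S$, $N[S]=N(S)\cup S$; $G[S]$ is the induced subgraph, $\alpha_w(G[S])$ the maximum weight of an independent set of $G[S]$ ($0$ if $S=\emptyset$). A vertex is sheathed if it lies in some MWVC (equivalently, some MWIS avoids it). A set $X$ is a simultaneous set if either $X$ is contained in some MWIS or $X$ is contained in some MWVC. Child / extending child: for an independent set $S$, a vertex $u\in N(S)$ with $w(u)\ge w(S\cap N(u))$ is a child of $S$; a child $u$ is an extending child if there is exactly one independent set $S^*\subseteq N(u)\setminus N[S]$ with $w(u)<w(S\cap N(u))+w(S^* )$, and this $S^*$ is called a satellite set of $S$. Confinement procedure from $v$: start with $S:=\{v\}$ and repeat: (i) while $S$ has an extending child, add its satellite set to $S$; (ii) if some child $u$ of $S$ satisfies $w(u)\ge w(S\cap N(u))+\alpha_w(G[N(u)\setminus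 N[S]])$, halt and call $v$ unconfined; (iii) if no child of $S$ is an extending child, halt, call $v$ confined and call $S_v:=S$ its confining set. *)

(* Defs.v *)
From mathcomp Require Import all_boot all_order all_algebra.
Set Implicit Arguments. Unset Strict Implicit. Unset Printing Implicit Defensive.
Import Order.TTheory GRing.Theory Num.Theory.
Local Open Scope ring_scope.

(* A finite simple undirected graph is a symmetric irreflexive relation
   [e : rel T] on a finite vertex type [T]; weights are [w : T -> R]. *)
Section Graph.
Variables (T : finType) (R : realFieldType) (e : rel T) (w : T -> R).

Definition wt (S : {set T}) : R := \sum_(x in S) w x.

Definition nbr (x : T) : {set T} := [set y | e x y].

Definition onbhd (S : {set T}) : {set T} :=
  (\bigcup_(x in S) nbr x) :\: S.
Definition cnbhd (S : {set T}) : {set T} := onbhd S :|: S.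

Definition independent (S : {set T}) : bool :=
  [forall x in S, forall y in S, ~~ e x y].

Definition vertex_cover (C : {set T}) : bool :=
  [forall x, forall y, e x y ==> (x \in C) || (y \in C)].

Definition alpha_w (X : {set T}) : R :=
  \big[Num.max/0]_(I : {set T} | (I \subset X) && independent I) wt I.

Definition MWIS (I : {set T}) : Prop :=
  independent I /\ forall J, independent J -> wt J <= wt I.

Definition MWVC (C : {set T}) : Prop :=
  vertex_cover C /\ forall D, vertex_cover D -> wt C <= wt D.

Definition sheathed (v : T) : Prop := exists C, MWVC C /\ v \in C.

Definition simultaneous (X : {set T}) : Prop :=
  (exists I, MWIS I /\ X \subset I) \/ (exists C, MWVC C /\ X \subset C).

Definition child (S : {set T}) (u : T) : Prop :=
  u \in onbhd S /\ wt (S :&: nbr u) <= w u.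

Definition sat_cand (S : {set T}) (u : T) (S' : {set T}) : Prop :=
  [/\ independent S', S' \subset nbr u :\: cnbhd S
    & w u < wt (S :&: nbr u) + wt S'].

Definition extending_child_with (S : {set T}) (u : T) (Ss : {set T}) : Prop :=
  child S u /\ sat_cand S u Ss /\ forall S', sat_cand S u S' -> S' = Ss.

Definition extending_child (S : {set T}) (u : T) : Prop :=
  exists Ss, extending_child_with S u Ss.

(* Sets reachable by step (i) of the confinement procedure from v,
   for some sequence of choices of extending children. *)
Inductive conf_reach (v : T) : {set T} -> Prop :=
  | conf_start : conf_reach v [set v]
  | conf_step S u Ss : conf_reach v S -> extending_child_with S u Ss ->
      conf_reach v (S :|: Ss).

(* A terminated run of step (i): no extending child remains. *)
Definition conf_final (v : T) (S : {set T}) : Prop :=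
  conf_reach v S /\ forall u, ~ extending_child S u.

Definition unconf_test (S : {set T}) : Prop :=
  exists u, child S u /\
    wt (S :&: nbr u) + alpha_w (nbr u :\: cnbhd S) <= w u.

(* The run from v ending at S declares v unconfined / confined (with S_v = S). *)
Definition unconfined_run (v : T) (S : {set T}) : Prop :=
  conf_final v S /\ unconf_test S.
Definition confined_run (v : T) (S : {set T}) : Prop :=
  conf_final v S /\ ~ unconf_test S.

End Graph.

(* Main.v *)
Require Import Defs.
From mathcomp Require Import all_boot all_order all_algebra.
From Stdlib Require Import Classical.
Import Order.TTheory GRing.Theory Num.Theory.
Local Open Scope ring_scope.

Section Aux.
Set Implicit Arguments. Unset Strict Implicit.
Variables (T : finType) (R : realFieldType) (e : rel T) (w : T -> R).
Hypotheses (e_sym : symmetric e) (e_irr : irreflexive e) (w_pos : forall x, 0 < w x).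

Lemma wt_ge0 (S : {set T}) : 0 <= wt w S.
Proof. by apply: sumr_ge0 => x _; apply: ltW. Qed.

Lemma indP (S : {set T}) x y : independent e S -> x \in S -> y \in S -> ~~ e x y.
Proof. by move=> /forallP/(_ x)/implyP H Hx Hy; move: (H Hx) => /forallP/(_ y)/implyP; apply. Qed.

Lemma indI (S : {set T}) : (forall x y, x \in S -> y \in S -> ~~ e x y) -> independent e S.
Proof. move=> H; apply/forallP => x; apply/implyP => Hx; apply/forallP => y; apply/implyP => Hy; exact: H. Qed.

Lemma ind_sub (A B : {set T}) : A \subset B -> independent e B -> independent e A.
Proof. move=> /subsetP AB IB; apply: indI => x y Hx Hy; apply: (indP IB); exact: AB. Qed.

Lemma onbhdP (S : {set T}) x : reflect (x \notin S /\ exists2 s, s \in S & e s x) (x \in onbhd e S).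
Proof.
rewrite /onbhd inE; apply: (iffP andP) => [[H1 /bigcupP [s Hs]]|[H1 [s Hs Hx]]].
  by rewrite inE => Hx; split => //; exists s.
by split => //; apply/bigcupP; exists s => //; rewrite inE.
Qed.

Lemma in_cnbhd (S : {set T}) x : (x \in cnbhd e S) = (x \in onbhd e S) || (x \in S).
Proof. by rewrite /cnbhd inE. Qed.

Lemma wt_compl (S : {set T}) : wt w (~: S) = wt w setT - wt w S.
Proof.
rewrite /wt [X in _ = X - _](bigID (mem S)) /=.
have -> : \sum_(i in [set: T] | i \in S) w i = \sum_(i in S) w i.
  by apply: eq_bigl => x; rewrite inE.
have -> : \sum_(i in [set: T] | i \notin S) w i = \sum_(i in ~: S) w i.
  by apply: eq_bigl => x; rewrite !inE.
by rewrite addrC addrK.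
Qed.

Lemma MWIS_MWVC (I : {set T}) : MWIS e w I -> MWVC e w (~: I).
Proof.
move=> [II MI]; split.
  apply/forallP => x; apply/forallP => y; apply/implyP => Exy.
  rewrite !inE -negb_and; apply/negP => /andP [Hx Hy].
  by move: (indP II Hx Hy); rewrite Exy.
move=> D VD.
have ID : independent e (~: D).
  apply: indI => x y; rewrite !inE => Hx Hy; apply/negP => Exy.
  move: VD => /forallP/(_ x)/forallP/(_ y)/implyP/(_ Exy).
  by rewrite (negbTE Hx) (negbTE Hy).
have := MI _ ID; rewrite !wt_compl => H.
by rewrite lerBlDr addrC -lerBlDr.
Qed.

Lemma sheathed_of (J : {set T}) v : MWIS e w J -> v \notin J -> sheathed e w v.
Proof. by move=> MJ vJ; exists (~: J); split; [apply: MWIS_MWVC | rewrite inE]. Qed.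

Lemma MWIS_exists : exists I, MWIS e w I.
Proof.
have I0 : independent e set0 by apply: indI => x y; rewrite inE.
case: (@arg_maxP _ R _ set0 (fun I => independent e I) (wt w) I0) => I II HI.
by exists I; split => // J IJ; apply: HI.
Qed.

Lemma bigmax_ge (P : pred {set T}) (F : {set T} -> R) I :
  P I -> F I <= \big[Num.max/0]_(J | P J) F J.
Proof.
move=> PI; rewrite -big_filter.
have : I \in [seq J <- index_enum _ | P J] by rewrite mem_filter PI mem_index_enum.
elim: [seq J <- index_enum _ | P J] => // a r IH; rewrite in_cons big_cons.
case/orP => [/eqP <-|/IH H]; rewrite le_max ?lexx //.
by rewrite H orbT.
Qed.

Lemma bigmax_le (P : pred {set T}) (F : {set T} -> R) c :
  0 <= c -> (forall J, P J -> F J <= c) -> \big[Num.max/0]_(J | P J) F J <= c.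
Proof.
move=> c0 H; apply: (big_ind (fun x => x <= c)) => // x y Hx Hy.
by rewrite ge_max Hx Hy.
Qed.

Lemma alpha_eq (K X : {set T}) : MWIS e w K -> K \subset X -> alpha_w e w X = wt w K.
Proof.
move=> [IK MK] KX; apply/le_anti/andP; split.
  by apply: bigmax_le; [apply: wt_ge0 | move=> J /andP [_ IJ]; apply: MK].
rewrite /alpha_w; by apply: (@bigmax_ge (fun I => (I \subset X) && independent e I) (wt w)); rewrite KX IK.
Qed.

Lemma reach_indep v S : conf_reach e w v S -> independent e S.
Proof.
elim => [|{}S u Ss _ IH [_ [[ISs] /subsetP sub _] _]].
  by apply: indI => x y; rewrite !inE => /eqP -> /eqP ->; rewrite e_irr.
have cross x y : x \in S -> y \in Ss -> ~~ e x y.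
  move=> Hx Hy; move: (sub _ Hy); rewrite in_setD in_cnbhd negb_or => /andP [/andP [Hn Hy'] _].
  apply/negP => Exy; move: Hn => /negP; apply; apply/onbhdP; split => //.
  by exists x.
apply: indI => x y; rewrite !inE => /orP [Hx|Hx] /orP [Hy|Hy].
- exact: indP IH Hx Hy.
- exact: cross.
- by rewrite e_sym; apply: cross.
- exact: indP ISs Hx Hy.
Qed.

Definition swapset (I : {set T}) u := u |: (I :\: nbr e u).

Lemma swap (I S : {set T}) u : MWIS e w I -> S \subset I -> u \in onbhd e S ->
  wt w (S :&: nbr e u) + wt w ((I :&: nbr e u) :\: cnbhd e S) <= w u ->
  MWIS e w (swapset I u).
Proof.
move=> [II MI] /subsetP SI /onbhdP [uS [s sS esu]] Hw.
have uI : u \notin I.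
  by apply/negP => uI; move: (indP II (SI _ sS) uI); rewrite esu.
set S' := (I :&: nbr e u) :\: cnbhd e S.
have eqI : I :&: nbr e u = (S :&: nbr e u) :|: S'.
  apply/setP => x; rewrite /S' in_setU in_setD !in_setI in_cnbhd; case xS : (x \in S) => /=.
    by rewrite (SI _ xS) /= orbT /= orbF.
  rewrite orbF; case xI : (x \in I) => /=; last by rewrite andbF.
  case exu : (x \in nbr e u); rewrite /= ?andbF ?andbT //.
  apply/esym/negP => /onbhdP [_ [t tS etx]].
  by move: (indP II (SI _ tS) xI); rewrite etx.
have dis : [disjoint S :&: nbr e u & S'].
  rewrite -setI_eq0; apply/eqP/setP => x; rewrite /S' !inE.
  by case: (x \in S); rewrite /= ?andbF ?andbT ?orbT ?andbF.
have wI : wt w I = wt w (S :&: nbr e u) + wt w S' + wt w (I :\: nbr e u).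
  rewrite /wt (@big_setID _ _ _ _ I (nbr e u)) /= -/(wt w _) eqI /wt.
  rewrite -(bigU _ _ _ dis); congr (_ + _); apply: eq_bigl => x.
  by rewrite in_setU.
have wJ : wt w (swapset I u) = w u + wt w (I :\: nbr e u).
  by rewrite /wt big_setU1 //= inE negb_and uI orbT.
have JI : independent e (swapset I u).
  apply: indI => x y; rewrite !inE.
  case/orP => [/eqP ->|/andP [xn xI]]; case/orP => [/eqP ->|/andP [yn yI]].
  - by rewrite e_irr.
  - done.
  - by rewrite e_sym.
  - exact: indP II xI yI.
split => // J IJ; apply: (le_trans (MI _ IJ)).
by rewrite wI wJ lerD2r.
Qed.

Lemma reach_step v (X S : {set T}) : conf_reach e w v S -> S \subset X -> independent e X ->
  forall I, MWIS e w I -> v \in I ->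
  S \subset I \/ exists J, MWIS e w J /\ (J :&: X) \proper (I :&: X).
Proof.
move=> H; elim: H => [|{}S u Ss HS IH [[uS _] [satSs uniq]]] SX IX I MI vI.
  by left; rewrite sub1set.
have SX' : S \subset X by apply: subset_trans SX; apply: subsetUl.
case: (IH SX' IX I MI vI) => [SI|]; last by right.
case SsI : (Ss \subset I); first by left; rewrite subUset SI SsI.
right.
set S' := (I :&: nbr e u) :\: cnbhd e S.
have nsat : ~ sat_cand e w S u S'.
  move=> /uniq HS'; move: SsI; rewrite -HS' => /negbT/negP; apply.
  by apply/subsetP => x; rewrite /S' in_setD in_setI => /andP [_ /andP [-> _]].
have Hw : wt w (S :&: nbr e u) + wt w S' <= w u.
  rewrite leNgt; apply/negP => Hlt; apply: nsat; split => //.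
    by apply: ind_sub (proj1 MI); apply/subsetP => x; rewrite /S' in_setD in_setI => /andP [_ /andP [-> _]].
  by apply/subsetP => x; rewrite /S' !in_setD in_setI => /andP [-> /andP [_ ->]].
exists (swapset I u); split; first exact: swap MI SI uS Hw.
move: uS => /onbhdP [uS [s sS esu]].
have uX : u \notin X.
  apply/negP => uX; move: (indP IX (subsetP SX' _ sS) uX); by rewrite esu.
apply/properP; split.
  apply/subsetP => x; rewrite !inE => /andP [/orP [/eqP xu|/andP [_ xI]] xX].
    by move: uX; rewrite -xu xX.
  by rewrite xI xX.
exists s; first by rewrite inE (subsetP SI _ sS) (subsetP SX' _ sS).
rewrite !inE negb_and; apply/orP; left.
rewrite e_sym esu /= ?andbF ?orbF.
by apply/negP => /eqP su; move: esu; rewrite su e_irr.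
Qed.

Lemma key v (X : {set T}) : conf_reach e w v X -> forall I, MWIS e w I -> v \in I ->
  X \subset I \/ exists J, [/\ MWIS e w J, v \notin J & J :&: X \subset I :&: X].
Proof.
move=> HX I.
have [n] := ubnP #|I :&: X|; elim: n I => // n IH I Hn MI vI.
have IX := reach_indep HX.
case: (reach_step HX (subxx X) IX MI vI) => [->|[J [MJ prJ]]]; first by left.
right.
have [JI _] := properP prJ.
case vJ : (v \in J); last by exists J; split => //; rewrite vJ.
have Hn' : (#|J :&: X| < n)%N.
  by apply: (leq_trans (proper_card prJ)); rewrite -ltnS.
case: (IH J Hn' MJ vJ) => [XJ|[J' [MJ' vJ' J'X]]].
  exfalso; move: prJ => /properP [_ [x]]; rewrite !inE => /andP [_ xX].
  by rewrite (subsetP XJ _ xX) xX.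
by exists J'; split => //; apply: subset_trans JI.
Qed.

End Aux.

Theorem corollary3p3 (T : finType) (R : realFieldType) (e : rel T) (w : T -> R)
  (e_sym : symmetric e) (e_irr : irreflexive e) (w_pos : forall x, 0 < w x)
  (v : T) :
  (forall S, unconfined_run e w v S ->
     sheathed e w v /\ alpha_w e w [set~ v] = alpha_w e w [set: T]) /\
  (forall Sv, confined_run e w v Sv ->
     (sheathed e w v \/ (forall I, MWIS e w I -> Sv \subset I)) /\
     (forall u Su, u \in Sv -> confined_run e w u Su -> v \in Su ->
        simultaneous e w [set u; v])).
Proof.
split.
  move=> S [[RS _] [u [[uS _] Hu]]].
  have [K [MK vK]] : exists K, MWIS e w K /\ v \notin K.
    have [I0 MI0] := MWIS_exists e w.
    case vI0 : (v \in I0); last by exists I0; rewrite vI0.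
    case: (key e_sym e_irr RS MI0 vI0) => [SI|[J [MJ vJ _]]]; last by exists J.
    set S' := (I0 :&: nbr e u) :\: cnbhd e S.
    have HS' : wt w S' <= alpha_w e w (nbr e u :\: cnbhd e S).
      rewrite /alpha_w; apply: (@bigmax_ge _ _ (fun I => (I \subset _) && independent e I) (wt w)).
      rewrite (ind_sub _ (proj1 MI0)) ?andbT;
        apply/subsetP => x; rewrite /S' !in_setD in_setI => /andP [H1 /andP [H2 H3]];
        by rewrite ?H1 ?H2 ?H3.
    have MJ := swap e_sym e_irr MI0 SI uS (le_trans (lerD (lexx _) HS') Hu).
    case vJ : (v \in swapset e I0 u); last by exists (swapset e I0 u); rewrite vJ.
    case: (key e_sym e_irr RS MJ vJ) => [SJ|[J [MJ' vJ' _]]]; last by exists J.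
    exfalso; move: uS => /onbhdP [_ [s sS esu]].
    move: (subsetP SJ _ sS); rewrite !inE e_sym esu /= ?andbF ?orbF => /eqP su.
    by move: esu; rewrite su e_irr.
  split; first exact: sheathed_of MK vK.
  rewrite (alpha_eq w_pos MK) ?(alpha_eq w_pos MK (subsetT K)) //.
  by apply/subsetP => x xK; rewrite !inE; apply/negP => /eqP xv; move: vK; rewrite -xv xK.
move=> Sv [[RSv _] _]; split.
  case: (classic (exists K, MWIS e w K /\ v \notin K)) => [[K [MK vK]]|nK].
    by left; apply: sheathed_of MK vK.
  right => I MI.
  case vI : (v \in I); last by exfalso; apply: nK; exists I; rewrite vI.
  case: (key e_sym e_irr RSv MI vI) => // [[J [MJ vJ _]]].
  by exfalso; apply: nK; exists J.
move=> u Su uSv [[RSu _] _] vSu.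
have sub2 (I : {set T}) : u \in I -> v \in I -> [set u; v] \subset I.
  by move=> uI vI; apply/subsetP => x; rewrite !inE => /orP [] /eqP ->.
case: (classic (exists K, MWIS e w K /\ u \notin K /\ v \notin K)) => [[K [MK [uK vK]]]|nK].
  right; exists (~: K); split; first exact: MWIS_MWVC.
  by apply: sub2; rewrite inE.
left; have [I0 MI0] := MWIS_exists e w; exists I0; split => //.
case vI0 : (v \in I0); case uI0 : (u \in I0); try by apply: sub2.
- case: (key e_sym e_irr RSv MI0 vI0) => [SI|[J [MJ vJ JI]]].
    by move: uI0; rewrite (subsetP SI _ uSv).
  exfalso; apply: nK; exists J; split => //; split => //.
  apply/negP => uJ; have : u \in J :&: Sv by rewrite inE uJ uSv.
  by move/(subsetP JI); rewrite inE uI0.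
- case: (key e_sym e_irr RSu MI0 uI0) => [SI|[J [MJ uJ JI]]].
    by move: vI0; rewrite (subsetP SI _ vSu).
  exfalso; apply: nK; exists J; split => //; split => //.
  apply/negP => vJ; have : v \in J :&: Su by rewrite inE vJ vSu.
  by move/(subsetP JI); rewrite inE vI0.
- by exfalso; apply: nK; exists I0; rewrite uI0 vI0.
Qed.
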